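(* Let $H$ be a separable complex Hilbert space, $(\Omega,\mu)$ a measure space with positive measure, and let $K\in B(H)$ have closed range. If $F:\Omega\to H$ is a Parseval continuous $K$-frame of $H$, then $K^{\dagger}F$ (i.e. $\omega\mapsto K^{\dagger}F(\omega)$) is a dual continuous $K$-Bessel sequence of $F$.
   Context: A map $F:\Omega\to H$ is weakly measurable if $\omega\mapsto\langle f,F(\omega)\rangle$ is measurable for every $f\in H$. A continuous Bessel sequence is a weakly measurable $G:\Omega\to H$ with $\int_\Omega|\langle f,G(\omega)\rangle|^2\,d\mu(\omega)\le B\|f\|^2$ for all $f\in H$, for some $B>0$. A Parseval continuous $K$-frame is a weakly measurable $F$ with $\int_\Omega|\langle f,F(\omega)\rangle|^2\,d\mu(\omega)=\|K^{\ast}f\|^2$ for all $f\in H$. A dual continuous $K$-Bessel sequence of $F$ is a continuous Bessel sequence $G$ such that $Kf=\int_\Omega\langle f,G(\omega)\rangle F(\omega)\,d\mu(\omega)$ for all $f\in H$ (weak integral). For $K$ with closed range, $K^{\dagger}\in B(H)$ denotes its Moore–Penrose pseudo-inverse, the unique operator with $KK^\dagger K=K$, $K^\dagger KK^\dagger=K^\dagger$, and $KK^\dagger$, $K^\dagger K$ self-adjoint. *)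

(* Defs.v *)
From HB Require Import structures.
From mathcomp Require Import all_boot all_order all_algebra.
From mathcomp Require Import all_classical all_reals all_analysis.
From mathcomp Require Import complex.
Set Implicit Arguments. Unset Strict Implicit. Unset Printing Implicit Defensive.
Import Order.TTheory GRing.Theory Num.Theory.
Local Open Scope ring_scope.

(* A complex inner product space: V is a vector space over C := R[i],
   ip is linear in the FIRST argument and conjugate-linear in the second. *)
Section Hilbert.
Variable R : realType.
Local Notation C := (R[i]).
Variable V : lmodType C.
Variable ip : V -> V -> C.

Record is_inner_product : Prop := {
  ip_linl : forall (a : C) (u v w : V), ip (a *: u + v) w = a * ip u w + ip v w;
  ip_conj : forall u v : V, ip v u = conjc (ip u v);
  ip_pos  : forall u : V, complex.Im (ip u u) = 0 /\ 0 <= complex.Re (ip u u);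
  ip_def  : forall u : V, ip u u = 0 -> u = 0 }.

Definition hnorm (u : V) : R := Num.sqrt (complex.Re (ip u u)).

Definition cvgH (u : nat -> V) (g : V) : Prop :=
  forall eps : R, 0 < eps -> exists N : nat, forall n, (N <= n)%N -> hnorm (u n - g) < eps.

Definition cauchyH (u : nat -> V) : Prop :=
  forall eps : R, 0 < eps -> exists N : nat,
    forall m n, (N <= m)%N -> (N <= n)%N -> hnorm (u m - u n) < eps.

Definition completeH : Prop := forall u, cauchyH u -> exists g, cvgH u g.

Definition separableH : Prop :=
  exists s : nat -> V, forall (g : V) (eps : R), 0 < eps -> exists n, hnorm (s n - g) < eps.

Record separable_hilbert : Prop := {
  sh_inner : is_inner_product;
  sh_complete : completeH;
  sh_separable : separableH }.

Definition bounded_op (K : V -> V) : Prop :=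
  (forall (a : C) (u v : V), K (a *: u + v) = a *: K u + K v) /\
  exists M : R, forall f, hnorm (K f) <= M * hnorm f.

Definition is_adjoint (K Ks : V -> V) : Prop :=
  forall f g, ip (K f) g = ip f (Ks g).

Definition self_adjoint (T : V -> V) : Prop := is_adjoint T T.

Definition closed_range (K : V -> V) : Prop :=
  forall (u : nat -> V) (g : V), (forall n, exists h, u n = K h) -> cvgH u g ->
    exists h, g = K h.

Definition is_pseudo_inverse (K Kd : V -> V) : Prop :=
  [/\ bounded_op Kd,
      (forall f, K (Kd (K f)) = K f),
      (forall f, Kd (K (Kd f)) = Kd f),
      self_adjoint (fun f => K (Kd f)) &
      self_adjoint (fun f => Kd (K f))].

Variables (d : measure_display) (T : measurableType d).
Variable mu : {measure set T -> \bar R}.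

Definition Cmeasurable (h : T -> C) : Prop :=
  measurable_fun setT (fun w => complex.Re (h w)) /\ measurable_fun setT (fun w => complex.Im (h w)).

Definition Cintegrable (h : T -> C) : Prop :=
  mu.-integrable setT (fun w => (complex.Re (h w))%:E) /\
  mu.-integrable setT (fun w => (complex.Im (h w))%:E).

Definition Cintegral (h : T -> C) : C :=
  Complex (Rintegral mu setT (fun w => complex.Re (h w)))
          (Rintegral mu setT (fun w => complex.Im (h w))).

Definition weakly_measurable (F : T -> V) : Prop :=
  forall f : V, Cmeasurable (fun w => ip f (F w)).

Definition cont_Bessel (G : T -> V) : Prop :=
  weakly_measurable G /\
  exists B : R, 0 < B /\ forall f : V,
    (\int[mu]_w ((ComplexField.Normc.normc (ip f (G w))) ^+ 2)%:E <= (B * hnorm f ^+ 2)%:E)%E.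

(* Parseval continuous K-frame; Ks stands for K^* *)
Definition parseval_cont_Kframe (Ks : V -> V) (F : T -> V) : Prop :=
  weakly_measurable F /\
  forall f : V, (\int[mu]_w ((ComplexField.Normc.normc (ip f (F w))) ^+ 2)%:E = (hnorm (Ks f) ^+ 2)%:E)%E.

(* G is a dual continuous K-Bessel sequence of F:
   K f = \int <f, G w> F w dmu  as a weak integral, i.e. for every g,
   w |-> <f,G w><F w,g> is integrable and <K f, g> = \int <f,G w><F w, g> dmu *)
Definition dual_cont_KBessel (K : V -> V) (F G : T -> V) : Prop :=
  cont_Bessel G /\
  forall f g : V,
    Cintegrable (fun w => ip f (G w) * ip (F w) g) /\
    ip (K f) g = Cintegral (fun w => ip f (G w) * ip (F w) g).

End Hilbert.

(* Main.v *)
Require Import Defs.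
From HB Require Import structures.
From mathcomp Require Import all_boot all_order all_algebra.
From mathcomp Require Import all_classical all_reals all_analysis.
From mathcomp Require Import complex.
From mathcomp Require Import ring lra.
From mathcomp Require Import measurable_realfun.
Set Implicit Arguments. Unset Strict Implicit. Unset Printing Implicit Defensive.
Import Order.TTheory GRing.Theory Num.Theory.
Local Open Scope ring_scope.

Section Cplx.
Local Open Scope complex_scope.
Variable R : realType.
Local Notation C := R[i].
Lemma ReD (x y : C) : complex.Re (x + y) = complex.Re x + complex.Re y.
Proof. by case: x; case: y. Qed.
Lemma ImD (x y : C) : complex.Im (x + y) = complex.Im x + complex.Im y.
Proof. by case: x; case: y. Qed.
Lemma ReM (x y : C) : complex.Re (x * y) = complex.Re x * complex.Re y - complex.Im x * complex.Im y.
Proof. by case: x; case: y. Qed.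
Lemma ImM (x y : C) : complex.Im (x * y) = complex.Re x * complex.Im y + complex.Im x * complex.Re y.
Proof. by case: x => a b; case: y => c d /=; rewrite addrC. Qed.
Lemma ReN (x : C) : complex.Re (- x) = - complex.Re x.
Proof. by case: x. Qed.
Lemma ImN (x : C) : complex.Im (- x) = - complex.Im x.
Proof. by case: x. Qed.
Lemma ReB (x y : C) : complex.Re (x - y) = complex.Re x - complex.Re y.
Proof. by rewrite ReD ReN. Qed.
Lemma ImB (x y : C) : complex.Im (x - y) = complex.Im x - complex.Im y.
Proof. by rewrite ImD ImN. Qed.
Lemma ReJ (x : C) : complex.Re (conjc x) = complex.Re x.
Proof. by case: x. Qed.
Lemma ImJ (x : C) : complex.Im (conjc x) = - complex.Im x.
Proof. by case: x. Qed.
Lemma ReC (r : R) : complex.Re (r%:C) = r. Proof. by []. Qed.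
Lemma ImC (r : R) : complex.Im (r%:C) = 0. Proof. by []. Qed.
Lemma Re1 : complex.Re (1 : C) = 1. Proof. by []. Qed.
Lemma Im1 : complex.Im (1 : C) = 0. Proof. by []. Qed.
Lemma Re0 : complex.Re (0 : C) = 0. Proof. by []. Qed.
Lemma Im0 : complex.Im (0 : C) = 0. Proof. by []. Qed.
Lemma Rei : complex.Re ('i : C) = 0. Proof. by []. Qed.
Lemma Imi : complex.Im ('i : C) = 1. Proof. by []. Qed.
Lemma Cext (x y : C) : complex.Re x = complex.Re y -> complex.Im x = complex.Im y -> x = y.
Proof. by case: x; case: y => /= ? ? ? ? -> ->. Qed.
Lemma conjcM (x y : C) : conjc (x * y) = conjc x * conjc y.
Proof. apply: Cext; rewrite ?(ReJ, ImJ, ReM, ImM); ring. Qed.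
Lemma conjcD (x y : C) : conjc (x + y) = conjc x + conjc y.
Proof. apply: Cext; rewrite ?(ReJ, ImJ, ReD, ImD); ring. Qed.
Lemma conjcN (x : C) : conjc (- x) = - conjc x.
Proof. apply: Cext; rewrite ?(ReJ, ImJ, ReN, ImN); ring. Qed.
Lemma conjcKK (x : C) : conjc (conjc x) = x.
Proof. apply: Cext; rewrite ?(ReJ, ImJ); ring. Qed.
Lemma conjc00 : conjc (0 : C) = 0.
Proof. by apply: Cext; rewrite ?ReJ ?ImJ ?oppr0. Qed.
Definition cn (c : C) : R := complex.Re c ^+ 2 + complex.Im c ^+ 2.
Lemma cn_ge0 c : 0 <= cn c.
Proof. by rewrite /cn addr_ge0 // sqr_ge0. Qed.
Lemma cn0 c : cn c <= 0 -> c = 0.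
Proof.
rewrite /cn => h.
have h1 : complex.Re c ^+ 2 = 0 by apply/eqP; rewrite eq_le sqr_ge0 andbT; move: (sqr_ge0 (complex.Im c)) h; lra.
have h2 : complex.Im c ^+ 2 = 0 by apply/eqP; rewrite eq_le sqr_ge0 andbT; move: (sqr_ge0 (complex.Re c)) h; lra.
apply: Cext; apply/eqP; rewrite -sqrf_eq0 ?h1 ?h2 //.
Qed.
Lemma normc_sq (c : C) : ComplexField.Normc.normc c ^+ 2 = cn c.
Proof. by case: c => a b; rewrite /= sqr_sqrtr // addr_ge0 // sqr_ge0. Qed.
End Cplx.

Section Hil.
Local Open Scope complex_scope.
Variables (R : realType) (V : lmodType R[i]) (ip : V -> V -> R[i]).
Hypothesis hip : is_inner_product ip.
Local Notation C := R[i].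
Local Notation nn u := (complex.Re (ip u u)).

Lemma ipDl u v w : ip (u + v) w = ip u w + ip v w.
Proof. by have := ip_linl hip 1 u v w; rewrite scale1r mul1r. Qed.
Lemma ip0l w : ip 0 w = 0.
Proof.
have h := ipDl 0 0 w; rewrite addr0 in h.
by apply: (addrI (ip 0 w)); rewrite -h addr0.
Qed.
Lemma ipZl a u w : ip (a *: u) w = a * ip u w.
Proof. by have := ip_linl hip a u 0 w; rewrite addr0 ip0l addr0. Qed.
Lemma ipNl u w : ip (- u) w = - ip u w.
Proof. by rewrite -scaleN1r ipZl mulN1r. Qed.
Lemma ipBl u v w : ip (u - v) w = ip u w - ip v w.
Proof. by rewrite ipDl ipNl. Qed.
Lemma ipDr u v w : ip w (u + v) = ip w u + ip w v.
Proof. by rewrite (ip_conj hip) ipDl conjcD -!(ip_conj hip). Qed.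
Lemma ipZr a u w : ip w (a *: u) = conjc a * ip w u.
Proof. by rewrite (ip_conj hip) ipZl conjcM -(ip_conj hip). Qed.
Lemma ip0r w : ip w 0 = 0.
Proof. by rewrite (ip_conj hip) ip0l conjc00. Qed.
Lemma ipNr u w : ip w (- u) = - ip w u.
Proof. by rewrite (ip_conj hip) ipNl conjcN -(ip_conj hip). Qed.
Lemma ipBr u v w : ip w (u - v) = ip w u - ip w v.
Proof. by rewrite ipDr ipNr. Qed.

Lemma nn_ge0 u : 0 <= nn u.
Proof. by case: (ip_pos hip u). Qed.
Lemma ipuu u : ip u u = (nn u)%:C.
Proof. by apply: Cext => //; case: (ip_pos hip u). Qed.
Lemma hnorm_sq u : hnorm ip u ^+ 2 = nn u.
Proof. by rewrite /hnorm sqr_sqrtr // nn_ge0. Qed.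
Lemma hnorm_ge0 u : 0 <= hnorm ip u.
Proof. by rewrite /hnorm sqrtr_ge0. Qed.
Lemma nn0 u : nn u = 0 -> u = 0.
Proof. by move=> h; apply: (ip_def hip); rewrite ipuu h. Qed.
Lemma ip_sep a b : (forall x, ip x a = ip x b) -> a = b.
Proof.
move=> h; apply/eqP; rewrite -subr_eq0; apply/eqP; apply: (ip_def hip).
by rewrite ipBr h subrr.
Qed.

Lemma nn_expand u v (a : C) :
  nn (u + a *: v) = nn u + 2 * complex.Re (conjc a * ip u v) + cn a * nn v.
Proof.
rewrite !ipDl !ipDr !ipZl !ipZr (ip_conj hip v u) (ipuu v).
set c := ip u v.
rewrite /cn !(ReD, ReM, ImM, ReJ, ImJ, ReC, ImC); ring.
Qed.

Lemma nnN u : nn (- u) = nn u.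
Proof. by rewrite ipNl ipNr opprK. Qed.
Lemma nnB u v : nn (u - v) = nn (v - u).
Proof. by rewrite -nnN opprB. Qed.

Lemma cs u v : cn (ip u v) <= nn u * nn v.
Proof.
have [v0|vpos] := eqVneq (nn v) 0.
  by rewrite v0 mulr0 (nn0 v0) ip0r /cn expr0n /= addr0.
have vp : 0 < nn v by rewrite lt_def vpos nn_ge0.
set s := (nn v)^-1.
have h := nn_ge0 (u + (- (s%:C * ip u v)) *: v).
rewrite nn_expand in h.
have e : complex.Re (conjc (- (s%:C * ip u v)) * ip u v) = - s * cn (ip u v).
  rewrite /cn !(ReD, ReM, ImM, ReJ, ImJ, ReC, ImC, ReN, ImN); ring.
have e2 : cn (- (s%:C * ip u v)) = s ^+ 2 * cn (ip u v).
  rewrite /cn !(ReD, ReM, ImM, ReJ, ImJ, ReC, ImC, ReN, ImN); ring.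
rewrite e e2 in h.
have sv : s * nn v = 1 by rewrite mulVf.
have := mulr_ge0 h (ltW vp).
move: (cn_ge0 (ip u v)) => c0.
set A := nn u in h *; set B := nn v in sv vp *; set X := cn _ in h c0 *.
move=> h2.
have e3 : (A + 2 * (- s * X) + s ^+ 2 * X * B) * B = A * B - X * (s * B) * 2 + X * (s * B) * (s * B) by ring.
by rewrite e3 sv in h2; lra.
Qed.
End Hil.

Section Riesz.
Local Open Scope complex_scope.
Variables (R : realType) (V : lmodType R[i]) (ip : V -> V -> R[i]).
Hypothesis hip : is_inner_product ip.
Hypothesis hc : completeH ip.
Local Notation C := R[i].
Local Notation nn u := (complex.Re (ip u u)).

Lemma le_eps (x y c : R) : (forall e, 0 < e -> x <= y + c * e) -> x <= y.
Proof.
move=> h; have [c0|cp] := lerP c 0.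
  by have := h 1 ltr01; rewrite mulr1; move: c0; lra.
apply/ler_addgt0Pr => e e0.
by have := h (e / c) (divr_gt0 e0 cp); rewrite mulrC divfK // lt0r_neq0.
Qed.

Lemma small_inv (e : R) : 0 < e -> exists N : nat, forall k, (N <= k)%N -> (k.+1%:R)^-1 < e.
Proof.
move=> e0; exists (Num.bound (e^-1)) => k Nk.
have ie : 0 <= e^-1 by rewrite invr_ge0 ltW.
have h := archi_boundP ie.
rewrite invf_plt ?posrE ?ltr0Sn //.
by apply: (lt_le_trans h); rewrite ler_nat; apply: leqW.
Qed.

Lemma cvg_nn u g : cvgH ip u g -> forall e : R, 0 < e ->
  exists N, forall n, (N <= n)%N -> nn (u n - g) < e.
Proof.
move=> h e e0; have se : 0 < Num.sqrt e by rewrite sqrtr_gt0.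
have [N hN] := h (Num.sqrt e) se.
by exists N => n /hN; rewrite /hnorm ltr_sqrt.
Qed.

Lemma hnorm_lt x (e : R) : 0 < e -> nn x < e ^+ 2 -> hnorm ip x < e.
Proof.
move=> e0 h; rewrite /hnorm -(gtr0_norm e0) -sqrtr_sqr ltr_sqrt //.
by rewrite exprn_gt0.
Qed.

Lemma nnD u v : nn (u + v) = nn u + 2 * complex.Re (ip u v) + nn v.
Proof.
have := nn_expand hip u v 1; rewrite scale1r => ->.
rewrite /cn !(ReM, ReJ, ImJ, Re1, Im1); ring.
Qed.

Lemma nnBB u v : nn (u - v) = nn u - 2 * complex.Re (ip u v) + nn v.
Proof.
have := nn_expand hip u v (-1); rewrite scaleN1r => ->.
rewrite /cn !(ReM, ReJ, ImJ, ReN, ImN, Re1, Im1); ring.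
Qed.

Lemma young a b (s : R) : 0 < s ->
  s * nn (a + b) <= s * (1 + s) * nn a + (1 + s) * nn b.
Proof.
move=> s0.
have h := nn_ge0 hip (b + (- (s%:C)) *: a).
rewrite (nn_expand hip) // (ip_conj hip a b) in h.
rewrite nnD.
move: h; rewrite /cn !(ReM, ReJ, ImJ, ReN, ImN, ReC, ImC) => h.
move: (nn_ge0 hip a) (nn_ge0 hip b) => ha hb.
set A := nn a in h ha *; set B := nn b in h hb *; set r := complex.Re (ip a b) in h *.
nra.
Qed.

Lemma ReJs (s : R) (c : C) : complex.Re (conjc (- (s%:C * c)) * c) = - s * cn c.
Proof. rewrite /cn !(ReD, ReM, ImM, ReJ, ImJ, ReC, ImC, ReN, ImN); ring. Qed.
Lemma cnNs (s : R) (c : C) : cn (- (s%:C * c)) = s ^+ 2 * cn c.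
Proof. rewrite /cn !(ReD, ReM, ImM, ReJ, ImJ, ReC, ImC, ReN, ImN); ring. Qed.
Lemma cnN (c : C) : cn (- c) = cn c.
Proof. rewrite /cn !(ReN, ImN); ring. Qed.

Lemma riesz (phi : V -> C) (M : R) :
  (forall a u v, phi (a *: u + v) = a * phi u + phi v) ->
  (forall x, cn (phi x) <= M * nn x) ->
  exists h, forall x, phi x = ip x h.
Proof.
move=> lin bnd.
have phiD u v : phi (u + v) = phi u + phi v by have := lin 1 u v; rewrite scale1r mul1r.
have phi0 : phi 0 = 0.
  have h := phiD 0 0; rewrite addr0 in h.
  by apply: (addrI (phi 0)); rewrite -h addr0.
have phiZ a u : phi (a *: u) = a * phi u by have := lin a u 0; rewrite addr0 phi0 addr0.
have phiN u : phi (- u) = - phi u by rewrite -scaleN1r phiZ mulN1r.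
have phiB u v : phi (u - v) = phi u - phi v by rewrite phiD phiN.
have [all0|] := pselect (forall x, phi x = 0).
  by exists 0 => x; rewrite (ip0r hip) // all0.
move=> /existsNP [z phiz].
pose S : set R := fun r => exists n, phi n = 0 /\ r = nn (z - n).
have Sz : S (nn z) by exists 0; rewrite phi0 subr0.
have Slb : lbound S (0 : R) by move=> r [n [_ ->]]; exact: nn_ge0.
have hinf : has_inf S by split; [exists (nn z) | exists 0].
set dl := inf S.
have dle n : phi n = 0 -> dl <= nn (z - n).
  by move=> pn; apply: (ge_inf hinf.2); exists n.
have dl0 : 0 <= dl by apply: lb_le_inf => //; exists (nn z).
have ex k : exists n, phi n = 0 /\ nn (z - n) < dl + (k.+1%:R)^-1.
  have ik : 0 < (k.+1%:R)^-1 :> R by rewrite invr_gt0 ltr0Sn.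
  have [r [n [pn ->]] hr] := inf_adherent ik hinf.
  by exists n.
have [nk hnk] := choice ex.
have hN k : phi (nk k) = 0 := (hnk k).1.
have hd k : nn (z - nk k) < dl + (k.+1%:R)^-1 := (hnk k).2.
pose two : C := (2 : R)%:C.
have two_e : two = 1 + 1 by apply: Cext; rewrite ?ReD ?ImD ?Re1 ?Im1 ?ReC ?ImC ?addr0.
have two0 : two != 0.
  apply/eqP => /(congr1 (fun c : C => complex.Re c)); rewrite ReC Re0 => /eqP; by rewrite pnatr_eq0.
have nn2 x : nn (two *: x) = 4 * nn x.
  rewrite (ipZl hip) (ipZr hip) // (ipuu hip) // !(ReM, ReJ, ImJ, ImM, ReC, ImC); ring.
have cau : cauchyH ip nk.
  move=> eps eps0.
  have e4 : 0 < eps ^+ 2 / 4 by rewrite divr_gt0 // exprn_gt0.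
  have [N hN'] := small_inv e4.
  exists N => m n hm hn.
  apply: hnorm_lt => //.
  pose w := two^-1 *: (nk m + nk n).
  have pw : phi w = 0 by rewrite phiZ phiD !hN addr0 mulr0.
  have ab : (z - nk m) + (z - nk n) = two *: (z - w).
    rewrite /w scalerBr scalerA mulfV // scale1r two_e scalerDl scale1r.
    by rewrite opprD addrACA.
  have amb : (z - nk m) - (z - nk n) = nk n - nk m.
    by rewrite opprB addrC addrA subrK.
  have par := nnD (z - nk m) (z - nk n).
  have par2 := nnBB (z - nk m) (z - nk n).
  rewrite ab nn2 in par; rewrite amb in par2.
  set E := eps ^+ 2 / 4; have eE : eps ^+ 2 = 4 * E by rewrite /E; field.
  have q1 : nn (z - nk n) < dl + E by apply: (lt_trans (hd n)); rewrite ltrD2l; exact: hN' n hn.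
  have q2 : nn (z - nk m) < dl + E by apply: (lt_trans (hd m)); rewrite ltrD2l; exact: hN' m hm.
  have q3 := dle w pw.
  rewrite (nnB hip (nk m) (nk n)) eE.
  lra.
have [p hp] := hc cau.
have cvp := cvg_nn hp.
have pp : phi p = 0.
  apply: cn0; apply: (@le_eps _ 0 `|M|) => e e0.
  have [k hk] := cvp e e0; have hk' := hk k (leqnn k).
  have -> : phi p = - phi (nk k - p) by rewrite phiB hN sub0r opprK.
  rewrite cnN; have := bnd (nk k - p).
  move: (ler_norm M) (normr_ge0 M) (nn_ge0 hip (nk k - p)) => h1 h2 h3.
  set X := nn (nk k - p) in hk' h3 *.
  nra.
have zp : nn (z - p) <= dl.
  apply: (@le_eps _ _ dl) => s s0.
  suff: s * nn (z - p) <= s * (dl + dl * s) by rewrite ler_pM2l.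
  apply: (@le_eps _ _ (s * (1 + s) + (1 + s))) => e e0.
  have [N1 h1] := cvp e e0; have [N2 h2] := small_inv e0.
  pose k := maxn N1 N2.
  have hk1 := h1 k (leq_maxl _ _); have hk2 := h2 k (leq_maxr _ _).
  have hd' : nn (z - nk k) < dl + e by apply: (lt_trans (hd k)); rewrite ltrD2l.
  have dec : z - p = (z - nk k) + (nk k - p) by rewrite addrA subrK.
  have yg := young (z - nk k) (nk k - p) s0.
  rewrite dec.
  set A := nn (z - nk k) in hd' yg *; set B := nn (nk k - p) in hk1 yg *.
  have q1 : s * (1 + s) * A <= s * (1 + s) * (dl + e).
    by rewrite ler_pM2l ?mulr_gt0 ?addr_gt0 //; lra.
  have q2 : (1 + s) * B <= (1 + s) * e.
    by rewrite ler_pM2l ?addr_gt0 //; lra.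
  lra.
have orth n : phi n = 0 -> ip (z - p) n = 0.
  move=> pn; set y := z - p; set c := ip y n.
  apply: cn0.
  set s := (nn n + 1)^-1.
  have n0 := nn_ge0 hip n.
  have np : 0 < nn n + 1 by lra.
  have s0 : 0 < s by rewrite invr_gt0.
  have sN : s * (nn n + 1) = 1 by rewrite mulVf // lt0r_neq0.
  have h := dle (p + (s%:C * c) *: n).
  rewrite phiD phiZ pn pp mulr0 addr0 in h.
  have := h erefl.
  rewrite opprD addrA -/y -scaleNr (nn_expand hip) // ReJs cnNs.
  move: (cn_ge0 c) => c0.
  set X := cn c in c0 *; clearbody s; set Nn := nn n in n0 sN np *.
  move=> h2.
  have h3 : s * (2 * X) <= s * (s * X * Nn) by rewrite -mulrA; lra.
  rewrite ler_pM2l // in h3.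
  have h4 : s * Nn = 1 - s by lra.
  have h5 : s * X * Nn = X * (1 - s) by rewrite -h4; ring.
  rewrite h5 in h3.
  nra.
set y := z - p.
have py : phi y = phi z by rewrite phiB pp subr0.
have ny : nn y != 0.
  by apply/eqP => /(nn0 hip) y0; apply: phiz; rewrite -py y0 phi0.
pose k := (nn y)%:C.
have knz : k != 0.
  by apply/eqP => /(congr1 (fun c : C => complex.Re c)); rewrite ReC Re0; apply/eqP.
exists (conjc (phi y * k^-1) *: y) => x.
rewrite (ipZr hip) // conjcKK.
have w0 : ip (phi y *: x - phi x *: y) y = 0.
  by rewrite (ip_conj hip) orth ?conjc00 // phiB !phiZ mulrC subrr.
rewrite (ipBl hip) // !(ipZl hip) // (ipuu hip) // -/k in w0.
move/eqP: w0; rewrite subr_eq0 => /eqP w0.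
apply: (mulIf knz); rewrite -w0.
by field.
Qed.
End Riesz.

Section Adj.
Local Open Scope complex_scope.
Variables (R : realType) (V : lmodType R[i]) (ip : V -> V -> R[i]).
Hypothesis hip : is_inner_product ip.
Hypothesis hc : completeH ip.
Local Notation C := R[i].
Local Notation nn u := (complex.Re (ip u u)).

Lemma adj_exists (A : V -> V) : bounded_op ip A ->
  exists As : V -> V, forall x f, ip (A x) f = ip x (As f).
Proof.
case=> lin [M hM].
have ex f : exists h, forall x, ip (A x) f = ip x h.
  apply: (@riesz _ _ _ hip hc _ (M ^+ 2 * nn f)) => [a u v|x].
    by rewrite lin (ip_linl hip).
  have h1 := cs hip (A x) f.
  have h2 : nn (A x) <= M ^+ 2 * nn x.
    rewrite -!(hnorm_sq hip); have := hM x.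
    move: (hnorm_ge0 ip (A x)) (hnorm_ge0 ip x) => a0 b0.
    set a := hnorm ip (A x) in a0 *; set b := hnorm ip x in b0 *.
    nra.
  move: (nn_ge0 hip f) (nn_ge0 hip (A x)) (cn_ge0 (ip (A x) f)) => f0 a0 c0.
  set X := nn f in f0 h1 *; set Y := nn (A x) in a0 h1 h2 *.
  nra.
have [As hAs] := choice ex.
by exists As.
Qed.
End Adj.

Section Pol.
Local Open Scope complex_scope.
Variable R : realType.
Local Notation C := R[i].
Lemma pol_re (a b : C) : complex.Re (a * conjc b) = 4^-1 * (cn (a + b) - cn (a - b)).
Proof. rewrite /cn !(ReD, ReB, ImD, ImB, ReM, ImM, ReJ, ImJ); by field. Qed.
Lemma pol_im (a b : C) : complex.Im (a * conjc b) = 4^-1 * (cn (a + 'i * b) - cn (a - 'i * b)).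
Proof. rewrite /cn !(ReD, ReB, ImD, ImB, ReM, ImM, ReJ, ImJ, ReN, ImN, Rei, Imi); by field. Qed.
End Pol.

Section Int.
Local Open Scope complex_scope.
Variables (R : realType) (V : lmodType R[i]) (ip : V -> V -> R[i]).
Hypothesis hip : is_inner_product ip.
Local Notation C := R[i].
Local Notation nn u := (complex.Re (ip u u)).
Variables (d : measure_display) (T : measurableType d) (mu : {measure set T -> \bar R}).
Variables (F : T -> V) (Ks : V -> V).
Hypothesis hFm : weakly_measurable ip F.
Hypothesis hFr : forall f, (\int[mu]_w ((ComplexField.Normc.normc (ip f (F w))) ^+ 2)%:E = (hnorm ip (Ks f) ^+ 2)%:E)%E.
Hypothesis KsD : forall u v, Ks (u + v) = Ks u + Ks v.
Hypothesis KsZ : forall a u, Ks (a *: u) = a *: Ks u.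

Lemma meas_cn x : measurable_fun setT (fun w => cn (ip x (F w))).
Proof. have [m1 m2] := hFm x; rewrite /cn; apply: measurable_funD; exact: measurable_funX. Qed.

Lemma int_cn_eq x : (\int[mu]_w (cn (ip x (F w)))%:E = (nn (Ks x))%:E)%E.
Proof. rewrite -(hnorm_sq hip) -hFr; apply: eq_integral => w _; by rewrite normc_sq. Qed.

Lemma int_cn x : mu.-integrable setT (fun w => (cn (ip x (F w)))%:E).
Proof.
apply/integrableP; split; first exact/measurable_EFinP/meas_cn.
have -> : (fun w => `|(cn (ip x (F w)))%:E|%E) = (fun w => (cn (ip x (F w)))%:E).
  by apply: funext => w; rewrite gee0_abs // lee_fin cn_ge0.
by rewrite int_cn_eq ltry.
Qed.

Lemma Rint_cn x : Rintegral mu setT (fun w => cn (ip x (F w))) = nn (Ks x).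
Proof. by rewrite /Rintegral int_cn_eq. Qed.

Lemma int_diff (u v : V) : mu.-integrable setT (fun w => (cn (ip u (F w)) - cn (ip v (F w)))%:E).
Proof.
apply: (eq_integrable measurableT _ _ _ (integrableB measurableT (int_cn u) (int_cn v))).
by move=> w _; rewrite EFinB.
Qed.

Lemma int_comb (u v : V) (k : R) : mu.-integrable setT (fun w => (k * (cn (ip u (F w)) - cn (ip v (F w))))%:E).
Proof.
apply: (eq_integrable measurableT _ _ _ (integrableZl measurableT k (int_diff u v))).
by move=> w _; rewrite EFinM.
Qed.

Lemma Rint_comb u v k : Rintegral mu setT (fun w => k * (cn (ip u (F w)) - cn (ip v (F w)))) = k * (nn (Ks u) - nn (Ks v)).
Proof.
rewrite RintegralZl //; last exact: int_diff.
by rewrite RintegralB // ?Rint_cn //; exact: int_cn.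
Qed.

Lemma KsN u : Ks (- u) = - Ks u.
Proof. by rewrite -scaleN1r KsZ scaleN1r. Qed.
Lemma KsB u v : Ks (u - v) = Ks u - Ks v.
Proof. by rewrite KsD KsN. Qed.

Lemma cint_re u v : mu.-integrable setT (fun w => (complex.Re (ip u (F w) * conjc (ip v (F w))))%:E).
Proof.
apply: (eq_integrable measurableT _ _ _ (int_comb (u + v) (u - v) 4^-1)) => w _.
by rewrite pol_re (ipDl hip) (ipBl hip).
Qed.

Lemma cint_im u v : mu.-integrable setT (fun w => (complex.Im (ip u (F w) * conjc (ip v (F w))))%:E).
Proof.
apply: (eq_integrable measurableT _ _ _ (int_comb (u + 'i *: v) (u - 'i *: v) 4^-1)) => w _.
by rewrite pol_im (ipDl hip) (ipBl hip) !(ipZl hip).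
Qed.

Lemma Rint_re u v : Rintegral mu setT (fun w => complex.Re (ip u (F w) * conjc (ip v (F w)))) = complex.Re (ip (Ks u) (Ks v)).
Proof.
rewrite (@eq_Rintegral _ _ _ mu setT (fun w => 4^-1 * (cn (ip (u + v) (F w)) - cn (ip (u - v) (F w))))); last first.
  by move=> w _; rewrite pol_re (ipDl hip) (ipBl hip).
rewrite Rint_comb KsD KsB (nnD hip) (nnBB hip).
by field.
Qed.

Lemma Rint_im u v : Rintegral mu setT (fun w => complex.Im (ip u (F w) * conjc (ip v (F w)))) = complex.Im (ip (Ks u) (Ks v)).
Proof.
rewrite (@eq_Rintegral _ _ _ mu setT (fun w => 4^-1 * (cn (ip (u + 'i *: v) (F w)) - cn (ip (u - 'i *: v) (F w))))); last first.
  by move=> w _; rewrite pol_im (ipDl hip) (ipBl hip) !(ipZl hip).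
rewrite Rint_comb KsD KsB !KsZ -scaleNr !(nn_expand hip).
rewrite /cn !(ReM, ImM, ReJ, ImJ, ReN, ImN, Rei, Imi).
by field.
Qed.

Lemma Cint_eq u v : Cintegral mu (fun w => ip u (F w) * conjc (ip v (F w))) = ip (Ks u) (Ks v).
Proof. by apply: Cext; rewrite /Cintegral /= ?Rint_re ?Rint_im. Qed.
End Int.

Theorem lemma3p2 (R : realType) (V : lmodType R[i]) (ip : V -> V -> R[i])
  (d : measure_display) (T : measurableType d) (mu : {measure set T -> \bar R})
  (K Ks Kd : V -> V) (F : T -> V) :
  separable_hilbert ip ->
  bounded_op ip K ->
  is_adjoint ip K Ks ->
  closed_range ip K ->
  is_pseudo_inverse ip K Kd ->
  parseval_cont_Kframe ip mu Ks F ->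
  dual_cont_KBessel ip mu K F (fun w => Kd (F w)).
Proof.
move=> [hip hc _] [Klin [MK hMK]] hadj _ [hKd hKKdK hKdKKd hQ hP] [hFm hFr].
have [Kds hKds] := adj_exists hip hc hKd.
have ipG f w : ip f (Kd (F w)) = ip (Kds f) (F w).
  by rewrite (ip_conj hip (Kd (F w)) f) hKds -(ip_conj hip).
have KsP f : Ks (Kds f) = Kd (K f).
  by apply: (ip_sep hip) => x; rewrite -hadj -hKds hP.
have KsL a u v : Ks (a *: u + v) = a *: Ks u + Ks v.
  apply: (ip_sep hip) => x.
  by rewrite -hadj (ipDr hip) (ipZr hip) (ipDr hip) (ipZr hip) -!hadj.
have KsD u v : Ks (u + v) = Ks u + Ks v by have := KsL 1 u v; rewrite !scale1r.
have Ks0 : Ks 0 = 0.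
  have h := KsD 0 0; rewrite addr0 in h.
  by apply: (addrI (Ks 0)); rewrite -h addr0.
have KsZ a u : Ks (a *: u) = a *: Ks u by have := KsL a u 0; rewrite addr0 Ks0 addr0.
have [hKdl [MKd hMKd]] := hKd.
split.
  split.
    move=> f; have -> : (fun w => ip f (Kd (F w))) = (fun w => ip (Kds f) (F w)).
      by apply: funext => w; rewrite ipG.
    exact: hFm.
  exists ((`|MKd| * `|MK|) ^+ 2 + 1); split.
    by rewrite ltr_pwDr // sqr_ge0.
  move=> f.
  have -> : (fun w => ((ComplexField.Normc.normc (ip f (Kd (F w)))) ^+ 2)%:E) =
            (fun w => ((ComplexField.Normc.normc (ip (Kds f) (F w))) ^+ 2)%:E).
    by apply: funext => w; rewrite ipG.
  rewrite hFr KsP lee_fin.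
  have h1 := hMKd (K f); have h2 := hMK f.
  move: (hnorm_ge0 ip (Kd (K f))) (hnorm_ge0 ip (K f)) (hnorm_ge0 ip f) => a0 b0 c0.
  move: (ler_norm MKd) (ler_norm MK) (normr_ge0 MKd) (normr_ge0 MK) => n1 n2 n3 n4.
  set a := hnorm ip (Kd (K f)) in a0 h1 *; set b := hnorm ip (K f) in b0 h1 h2 *.
  set c := hnorm ip f in c0 h2 *.
  set m1 := `|MKd| in n1 n3 *; set m2 := `|MK| in n2 n4 *.
  have h3 : a <= m1 * b by nra.
  have h4 : b <= m2 * c by nra.
  have h5 : a <= m1 * m2 * c by rewrite -mulrA; apply: (le_trans h3); rewrite ler_wpM2l.
  have h6 : 0 <= m1 * m2 * c by rewrite !mulr_ge0.
  have h7 : a ^+ 2 <= (m1 * m2 * c) ^+ 2 by rewrite ler_sqr ?nnegrE.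
  have h8 : (m1 * m2 * c) ^+ 2 = (m1 * m2) ^+ 2 * c ^+ 2 by rewrite exprMn.
  rewrite h8 in h7.
  move: (sqr_ge0 c) => c2; set c' := c ^+ 2 in c2 h7 *.
  set q := (m1 * m2) ^+ 2 in h7 *.
  nra.
move=> f g.
have -> : (fun w => ip f (Kd (F w)) * ip (F w) g) =
          (fun w => ip (Kds f) (F w) * conjc (ip g (F w))).
  by apply: funext => w; rewrite ipG (ip_conj hip g (F w)).
split.
  split.
    exact: (cint_re hip hFm hFr).
  exact: (cint_im hip hFm hFr).
rewrite (Cint_eq hip hFm hFr KsD KsZ) KsP -hadj hKKdK.
by [].
Qed.
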